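(* Every nonempty closed subspace of an $S^{\ast}$-well-filtered space is $S^{\ast}$-well-filtered.
   Context: All spaces are $T_0$. The specialization order of $X$ is given by $x\le y$ iff $x\in cl(\{y\})$; ${\uparrow}$ is taken with respect to it; a subset is saturated if it is an upper set in the specialization order. $K(X)$ denotes the set of all nonempty compact saturated subsets of $X$; a family in $K(X)$ is filtered if any two members contain a common member. $X$ is $S^{\ast}$-well-filtered if for every filtered family $\{K_i\mid i\in I\}\subseteq K(X)$, every $G\in K(X)$ and every nonempty open $U$, $\bigcap_{i\in I}K_i\cap G\subseteq U$ implies $K_i\cap G\subseteq U$ for some $i$. *)

(* Defs.v *)
From Stdlib Require Import List.
Set Implicit Arguments.

Section Topo.
Variable X : Type.
Variable O : (X -> Prop) -> Prop.

Definition is_topology : Prop :=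
  O (fun _ => True) /\
  (forall U V, O U -> O V -> O (fun x => U x /\ V x)) /\
  (forall F : (X -> Prop) -> Prop, (forall U, F U -> O U) ->
     O (fun x => exists U, F U /\ U x)).

(* specialization order: x <= y iff x \in cl({y}) *)
Definition spec_le (x y : X) : Prop := forall U, O U -> U x -> U y.

Definition T0 : Prop := forall x y, spec_le x y -> spec_le y x -> x = y.

Definition closed (A : X -> Prop) : Prop := O (fun x => ~ A x).

Definition saturated (K : X -> Prop) : Prop :=
  forall x y, K x -> spec_le x y -> K y.

Definition compact (K : X -> Prop) : Prop :=
  forall F : (X -> Prop) -> Prop, (forall U, F U -> O U) ->
    (forall x, K x -> exists U, F U /\ U x) ->
    exists l : list (X -> Prop), (forall U, In U l -> F U) /\
      (forall x, K x -> exists U, In U l /\ U x).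

Definition inKX (K : X -> Prop) : Prop :=
  (exists x, K x) /\ compact K /\ saturated K.

Definition filtered (I : Type) (K : I -> X -> Prop) : Prop :=
  inhabited I /\
  forall i j, exists k, forall x, K k x -> K i x /\ K j x.

Definition S_star_wf : Prop :=
  forall (I : Type) (K : I -> X -> Prop),
    (forall i, inKX (K i)) -> filtered K ->
    forall G : X -> Prop, inKX G ->
    forall U : X -> Prop, O U -> (exists x, U x) ->
    (forall x, (forall i, K i x) -> G x -> U x) ->
    exists i, forall x, K i x -> G x -> U x.
End Topo.

Definition subspace_open (X : Type) (O : (X -> Prop) -> Prop) (A : X -> Prop)
  : ({x : X | A x} -> Prop) -> Prop :=
  fun V => exists U, O U /\ forall y : {x : X | A x}, V y <-> U (proj1_sig y).

(* Main.v *)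
Require Import Defs.
From Stdlib Require Import List Classical.

Section Aux.
Variable X : Type.
Variable O : (X -> Prop) -> Prop.
Variable A : X -> Prop.
Let S := {x : X | A x}.

Definition upS (K : S -> Prop) (x : X) : Prop :=
  exists k : S, K k /\ spec_le O (proj1_sig k) x.

Lemma spec_refl (x : X) : spec_le O x x.
Proof. intros U _ H; exact H. Qed.

Lemma upS_back (K : S -> Prop) : saturated (subspace_open O A) K ->
  forall y : S, upS K (proj1_sig y) -> K y.
Proof.
  intros Hs y [k [Hk Hle]]. apply (Hs k y Hk).
  intros V [U [HU HV]] Vk. apply HV. apply Hle; [exact HU|]. apply HV; exact Vk.
Qed.

Lemma lift_list (F : (X -> Prop) -> Prop) (l' : list (S -> Prop)) :
  (forall V, In V l' -> exists W, F W /\ forall y : S, V y <-> W (proj1_sig y)) ->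
  exists l, (forall W, In W l -> F W) /\
    (forall V y, In V l' -> V y -> exists W, In W l /\ W (proj1_sig y)).
Proof.
  induction l' as [|V0 l' IH]; intros H.
  - exists nil. split; [intros W []|intros V y []].
  - destruct IH as [l [H1 H2]]. { intros V HV. apply H. right; exact HV. }
    destruct (H V0 (or_introl eq_refl)) as [W0 [HW0 HE]].
    exists (W0 :: l). split.
    + intros W [<-|HW]; [exact HW0| exact (H1 W HW)].
    + intros V y [<-|HV] Vy.
      * exists W0. split; [left; reflexivity| apply HE; exact Vy].
      * destruct (H2 V y HV Vy) as [W [HW Wy]]. exists W. split; [right; exact HW|exact Wy].
Qed.

Lemma upS_inKX (K : S -> Prop) : inKX (subspace_open O A) K -> inKX O (upS K).
Proof.
  intros [[k Hk] [Hc Hs]]. split; [|split].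
  - exists (proj1_sig k). exists k. split; [exact Hk| apply spec_refl].
  - intros F HF Hcov.
    set (F' := fun V : S -> Prop => exists W, F W /\ forall y : S, V y <-> W (proj1_sig y)).
    destruct (Hc F') as [l' [Hl'1 Hl'2]].
    + intros V [W [HW HE]]. exists W. split; [apply HF; exact HW| exact HE].
    + intros y Ky. destruct (Hcov (proj1_sig y)) as [W [HW Wy]].
      { exists y. split; [exact Ky| apply spec_refl]. }
      exists (fun z : S => W (proj1_sig z)). split; [|exact Wy].
      exists W. split; [exact HW| intros z; split; auto].
    + destruct (lift_list F l' Hl'1) as [l [Hl1 Hl2]].
      exists l. split; [exact Hl1|].
      intros x [y [Ky Hle]]. destruct (Hl'2 y Ky) as [V [HV Vy]].
      destruct (Hl2 V y HV Vy) as [W [HW Wy]]. exists W. split; [exact HW|].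
      apply Hle; [apply HF; apply Hl1; exact HW| exact Wy].
  - intros x z [y [Ky Hle]] Hxz. exists y. split; [exact Ky|].
    intros U HU Uy. apply Hxz; [exact HU|]. apply Hle; assumption.
Qed.
End Aux.

Theorem mainTheorem14 (X : Type) (O : (X -> Prop) -> Prop) :
  is_topology O -> T0 O -> S_star_wf O ->
  forall A : X -> Prop, closed O A -> (exists x, A x) ->
  S_star_wf (subspace_open O A).
Proof.
  intros [_ [_ Hun]] _ Hwf A HA _ I K HK [Hinh Hfil] G HG V [U [HU HV]] [v Vv] Hsub.
  set (U' := fun x => exists W, (W = U \/ W = (fun x => ~ A x)) /\ W x).
  assert (Hf : filtered (fun i => @upS X O A (K i))).
  { split; [exact Hinh|]. intros i j.
    destruct (Hfil i j) as [k Hk]. exists k. intros x [y [Ky Hle]].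
    destruct (Hk y Ky) as [H1 H2]. split; exists y; auto. }
  destruct (Hwf I (fun i => @upS X O A (K i)) (fun i => @upS_inKX X O A (K i) (HK i))
              Hf (@upS X O A G) (@upS_inKX X O A G HG) U')
    as [i Hi].
  - apply Hun. intros W [->| ->]; [exact HU| exact HA].
  - exists (proj1_sig v). exists U. split; [left; reflexivity| apply HV; exact Vv].
  - intros x Hx Gx. destruct (classic (A x)) as [Ax|nAx].
    + exists U. split; [left; reflexivity|].
      set (y := exist A x Ax : {x | A x}).
      apply (HV y). apply Hsub.
      * intros i. apply (@upS_back X O A (K i) (proj2 (proj2 (HK i))) y). exact (Hx i).
      * apply (@upS_back X O A G (proj2 (proj2 HG)) y). exact Gx.
    + exists (fun x => ~ A x). split; [right; reflexivity| exact nAx].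
  - exists i. intros y Ky Gy.
    destruct (Hi (proj1_sig y)) as [W [[->| ->] Wy]].
    + exists y. split; [exact Ky| apply spec_refl].
    + exists y. split; [exact Gy| apply spec_refl].
    + apply HV; exact Wy.
    + exfalso. apply Wy. exact (proj2_sig y).
Qed.
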